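(* Let $X\in[0,1]^{N\times N}$, let $Q_{2D}(X)$ be the two-dimensional first-order $\Sigma\Delta$ quantization of $X$ with an alphabet of step size $\delta$, whose state matrix $u$ satisfies $X-Q_{2D}(X)=DuD^T$ and $\|u\|_{\max}\leq\delta/2$, and let $\hat X$ be a solution to $$\min_{Z\in\mathbb{R}^{N\times N}}\|D^TZ\|_1+\|ZD\|_1\quad\text{subject to}\quad\|D^{-1}(Z-Q_{2D}(X))(D^{-1})^T\|_{\max}\leq\delta/2.$$ Then for every integer $1\leq s\leq N^2$, $$\|\hat X-X\|_F\leq C\Big(\sqrt{s}\sqrt{\delta}+\sqrt{\sigma_s(D^TX)}+\sqrt{\sigma_s(XD)}\Big)\sqrt{\delta},$$ where $C$ is a constant independent of $X$.
   Context: $D$ is the $N\times N$ matrix with $1$ on the diagonal, $-1$ on the subdiagonal, $0$ elsewhere. For matrices, $\|\cdot\|_1$ is the entrywise $\ell_1$ norm and $\|\cdot\|_{\max}$ the largest absolute entry; for a matrix $Z$, $\sigma_s(Z)$ is the $\ell_1$ distance between the vectorization of $Z$ and its best $s$-term approximation. The two-dimensional first-order $\Sigma\Delta$ quantization with a finite alphabet $\mathcal{A}$: with $u_{i,0}=u_{0,j}=0$, for $i,j\geq1$ set $q_{i,j}=Q_{\mathcal{A}}(u_{i,j-1}+u_{i-1,j}-u_{i-1,j-1}+X_{i,j})$ and $u_{i,j}=u_{i,j-1}+u_{i-1,j}-u_{i-1,j-1}+X_{i,j}-q_{i,j}$, $Q_{\mathcal{A}}(z)$ a nearest element of $\mathcal{A}$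 to $z$; $Q_{2D}(X)=q$. The alphabet is assumed such that $\|u\|_{\max}\leq\delta/2$. *)

(* Defs.v *)
From HB Require Import structures.
From mathcomp Require Import all_boot all_order all_algebra.
From mathcomp Require Import reals.
Set Implicit Arguments. Unset Strict Implicit. Unset Printing Implicit Defensive.
Import Order.TTheory GRing.Theory Num.Theory.
Local Open Scope ring_scope.

Section Defs.
Variable R : realType.

Definition Dmx (N : nat) : 'M[R]_N :=
  \matrix_(i, j) (if i == j then 1 else if (i : nat) == j.+1 then -1 else 0).

Definition l1 (m n : nat) (Z : 'M[R]_(m, n)) : R := \sum_i \sum_j `|Z i j|.

Definition maxnorm (m n : nat) (Z : 'M[R]_(m, n)) : R :=
  \big[Order.max/0]_i \big[Order.max/0]_j `|Z i j|.

Definition frob (m n : nat) (Z : 'M[R]_(m, n)) : R :=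
  Num.sqrt (\sum_i \sum_j Z i j ^+ 2).

(* sigma_s(Z): l1 distance from vec(Z) to its best s-term approximation,
   i.e. min over index sets S with |S| <= s of the l1 mass off S. *)
Definition sigma_s (m n : nat) (s : nat) (Z : 'M[R]_(m, n)) : R :=
  \big[Order.min/l1 Z]_(S : {set 'I_m * 'I_n} | (#|S| <= s)%N)
     \sum_(k in ~: S) `|Z k.1 k.2|.

Definition alphabet_step (A : seq R) (delta : R) : Prop :=
  exists (a0 : R) (m : nat), A = [seq a0 + k%:R * delta | k <- iota 0 m.+1].

Definition nearest (A : seq R) (v z : R) : Prop :=
  z \in A /\ forall a, a \in A -> `|v - z| <= `|v - a|.

(* 1-based access to the state with zero boundary u_{i,0} = u_{0,j} = 0 *)
Definition uget (N : nat) (u : 'M[R]_N) (a b : nat) : R :=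
  if (0 < a)%N && (0 < b)%N then
    match @insub _ (fun k => (k < N)%N) 'I_N a.-1,
          @insub _ (fun k => (k < N)%N) 'I_N b.-1 with
    | Some i, Some j => u i j
    | _, _ => 0
    end
  else 0.

(* q = Q_2D(X) with state matrix u: entry (i,j) (0-based) is entry (i+1,j+1)
   of the paper's 1-based recursion. *)
Definition sigma_delta_2D (N : nat) (A : seq R) (X q u : 'M[R]_N) : Prop :=
  forall i j : 'I_N,
    let v := uget u i j.+1 + uget u i.+1 j - uget u i j + X i j in
    nearest A v (q i j) /\ u i j = v - q i j.

Definition feasible (N : nat) (delta : R) (q Z : 'M[R]_N) : Prop :=
  maxnorm (invmx (Dmx N) *m (Z - q) *m (invmx (Dmx N))^T) <= delta / 2.

Definition objective (N : nat) (Z : 'M[R]_N) : R :=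
  l1 ((Dmx N)^T *m Z) + l1 (Z *m Dmx N).

End Defs.

(* Main.v *)
Require Import Defs.
From HB Require Import structures.
From mathcomp Require Import all_boot all_order all_algebra.
From mathcomp Require Import reals.
From mathcomp Require Import ring lra.
Import Order.TTheory GRing.Theory Num.Theory.
Local Open Scope ring_scope.
Set Implicit Arguments. Unset Strict Implicit. Unset Printing Implicit Defensive.

Section S.
Variable R : realType.

Lemma sum_ind_le1 (T : finType) (P : pred T) :
  (forall x y, P x -> P y -> x = y) -> \sum_j (P j)%:R <= 1 :> R.
Proof.
move=> uP; case: (pickP P) => [x Px|P0].
  rewrite (bigD1 x) //= Px big1 ?addr0 // => y nyx; case Py: (P y) => //=.
  by move: nyx; rewrite (uP _ _ Py Px) eqxx.
by rewrite big1 ?ler01 // => y _; rewrite P0.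
Qed.


Lemma sum_pred1_ord N (k : 'I_N) (F : 'I_N -> R) :
  \sum_m ((k == m)%:R * F m) = F k.
Proof.
rewrite (bigD1 k) //= eqxx mul1r big1 ?addr0 // => m nmk.
by rewrite eq_sym (negbTE nmk) mul0r.
Qed.

Lemma sum_predS_ord N (k : 'I_N) (G : nat -> R) : G 0 = 0 ->
  \sum_(m : 'I_N) (((k : nat) == m.+1)%:R * G m.+1) = G k.
Proof.
move=> G0; case: k => [[|k] Hk] /=.
  by rewrite G0 big1 // => m _; rewrite mul0r.
have Hk' : (k < N)%N by apply: ltnW.
rewrite (bigD1 (Ordinal Hk')) //= eqxx mul1r big1 ?addr0 // => m nmk.
case E: (k.+1 == m.+1) => //; last by rewrite mul0r.
move: nmk E; rewrite eqSS => /negP nmk /eqP E; exfalso; apply: nmk.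
by apply/eqP/val_inj => /=.
Qed.

Lemma DmxE N (k m : 'I_N) : Dmx R N k m = (k == m)%:R - ((k : nat) == m.+1)%:R.
Proof.
rewrite /Dmx mxE; case: (k =P m) => [->|nkm].
  by rewrite ltn_eqF // subr0.
by case: ifP => _ /=; ring.
Qed.

Lemma Dsum N (G : nat -> R) (k : 'I_N) : G 0 = 0 ->
  \sum_m Dmx R N k m * G m.+1 = G k.+1 - G k.
Proof.
move=> G0.
under eq_bigr do rewrite DmxE mulrBl.
by rewrite sumrB (sum_pred1_ord k (fun m : 'I_N => G m.+1)) sum_predS_ord.
Qed.

Lemma absD_le N (k m : 'I_N) :
  `|Dmx R N k m| <= (k == m)%:R + ((k : nat) == m.+1)%:R.
Proof.
rewrite DmxE; apply: le_trans (ler_normB _ _) _.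
by rewrite !normr_nat.
Qed.

Lemma Drow N (k : 'I_N) : \sum_m `|Dmx R N k m| <= 2%:R.
Proof.
apply: le_trans (ler_sum _ (fun m _ => absD_le k m)) _.
rewrite big_split /= (_ : 2%:R = 1 + 1 :> R) //; apply: lerD.
  apply: sum_ind_le1 => x y /eqP <- /eqP ->; by [].
apply: sum_ind_le1 => x y /eqP -> /eqP [] ?; exact: val_inj.
Qed.

Lemma Dcol N (k : 'I_N) : \sum_m `|Dmx R N m k| <= 2%:R.
Proof.
apply: le_trans (ler_sum _ (fun m _ => absD_le m k)) _.
rewrite big_split /= (_ : 2%:R = 1 + 1 :> R) //; apply: lerD.
  apply: sum_ind_le1 => x y /eqP <- /eqP ->; by [].
apply: sum_ind_le1 => x y /eqP E1 /eqP E2; apply: val_inj; by rewrite /= E1 E2.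
Qed.

Lemma Dunit N : Dmx R N \in unitmx.
Proof.
pose L : 'M[R]_N := \matrix_(i, j) ((j <= i)%N)%:R.
suff H : Dmx R N *m L = 1%:M by case: (mulmx1_unit H).
apply/matrixP => i j; rewrite [LHS]mxE [RHS]mxE.
rewrite (eq_bigr (fun m : 'I_N => Dmx R N i m * ((j < m.+1)%N)%:R)); last by move=> m _; rewrite [L m j]mxE ltnS.
rewrite (@Dsum N (fun a => ((j < a)%N)%:R) i erefl).
by rewrite -(inj_eq val_inj) /= ltnS; case: (ltngtP j i) => _ /=; ring.
Qed.
Lemma sigma_arg m n s (Z : 'M[R]_(m, n)) : exists S : {set 'I_m * 'I_n},
  (#|S| <= s)%N /\ sigma_s s Z = \sum_(k in ~: S) `|Z k.1 k.2|.
Proof.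
rewrite /sigma_s (bigmin_eq_arg _ set0).
- case: arg_minP => //=; first by rewrite cards0.
  move=> S HS _; by exists S.
- by rewrite cards0.
move=> S _; rewrite /l1 pair_bigA /=.
rewrite [X in _ <= X](bigID (fun k => k \in ~: S)) /= lerDl.
by apply: sumr_ge0 => i _; exact: normr_ge0.
Qed.
Lemma maxnorm_ge m n (Z : 'M[R]_(m, n)) i j : `|Z i j| <= maxnorm Z.
Proof.
rewrite /maxnorm (bigD1 i) //= le_max; apply/orP; left.
by rewrite (bigD1 j) //= le_max lexx.
Qed.
Lemma cs_w (T : finType) (w x : T -> R) : (forall i, 0 <= w i) ->
  (\sum_i w i * x i) ^+ 2 <= (\sum_i w i) * (\sum_i w i * x i ^+ 2).
Proof.
move=> w0.
have H : 0 <= \sum_i \sum_j w i * w j * (x i - x j) ^+ 2.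
  apply: sumr_ge0 => i _; apply: sumr_ge0 => j _.
  by apply: mulr_ge0; [exact: mulr_ge0 | exact: sqr_ge0].
have E : \sum_i \sum_j w i * w j * (x i - x j) ^+ 2 =
  2%:R * ((\sum_i w i) * (\sum_i w i * x i ^+ 2) - (\sum_i w i * x i) ^+ 2).
  have E1 : \sum_i \sum_j w i * w j * (x i - x j) ^+ 2 =
    \sum_i \sum_j (w j * (w i * x i ^+ 2)) + \sum_i \sum_j (w i * (w j * x j ^+ 2))
    - 2%:R * \sum_i \sum_j (w i * x i) * (w j * x j).
    rewrite mulr_sumr -!big_split /= -sumrB; apply: eq_bigr => i _.
    rewrite mulr_sumr -!big_split /= -sumrB; apply: eq_bigr => j _.
    ring.
  rewrite E1.
  have F1 : \sum_i \sum_j (w j * (w i * x i ^+ 2)) = (\sum_i w i) * (\sum_i w i * x i ^+ 2).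
    rewrite mulr_sumr; apply: eq_bigr => i _; by rewrite mulr_suml.
  have F2 : \sum_i \sum_j (w i * (w j * x j ^+ 2)) = (\sum_i w i) * (\sum_i w i * x i ^+ 2).
    rewrite mulr_suml; apply: eq_bigr => i _; by rewrite mulr_sumr.
  have F3 : \sum_i \sum_j (w i * x i) * (w j * x j) = (\sum_i w i * x i) ^+ 2.
    rewrite expr2 mulr_suml; apply: eq_bigr => i _; by rewrite mulr_sumr.
  rewrite F1 F2 F3; ring.
rewrite E in H; move: H; rewrite pmulr_rge0 ?subr_ge0 //; lra.
Qed.

Lemma uget_S N (u : 'M[R]_N) (m l : 'I_N) : uget u m.+1 l.+1 = u m l.
Proof.
rewrite /uget /= (insubT (fun k => (k < N)%N) (ltn_ord m)).
rewrite (insubT (fun k => (k < N)%N) (ltn_ord l)).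
by congr (u _ _); apply: val_inj.
Qed.

Lemma uget_0l N (u : 'M[R]_N) b : uget u 0 b = 0.
Proof. by []. Qed.

Lemma uget_0r N (u : 'M[R]_N) a : uget u a 0 = 0.
Proof. by rewrite /uget andbF. Qed.

Lemma DuDt N (u : 'M[R]_N) (i j : 'I_N) :
  (Dmx R N *m u *m (Dmx R N)^T) i j =
  uget u i.+1 j.+1 - uget u i j.+1 - uget u i.+1 j + uget u i j.
Proof.
rewrite [LHS]mxE.
rewrite (eq_bigr (fun l : 'I_N => Dmx R N j l *
   ((fun b => uget u i.+1 b - uget u i b) l.+1))).
  by rewrite (@Dsum N (fun b => uget u i.+1 b - uget u i b)) ?uget_0r ?subrr //; ring.
move=> l _; rewrite [(_^T) l j]mxE [(Dmx R N *m u) i l]mxE.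
rewrite (eq_bigr (fun m : 'I_N => Dmx R N i m * ((fun a => uget u a l.+1) m.+1))).
  by rewrite (@Dsum N (fun a => uget u a l.+1)) // mulrC.
by move=> m _; rewrite uget_S.
Qed.

Definition fsq m n (Z : 'M[R]_(m, n)) := \sum_i \sum_j Z i j ^+ 2.
Definition dotm m n (A B : 'M[R]_(m, n)) := \sum_i \sum_j A i j * B i j.

Lemma l1_tr m n (Z : 'M[R]_(m, n)) : l1 Z^T = l1 Z.
Proof. rewrite /l1 exchange_big; apply: eq_bigr => i _; apply: eq_bigr => j _; by rewrite mxE. Qed.

Lemma fsq_tr m n (Z : 'M[R]_(m, n)) : fsq Z^T = fsq Z.
Proof. rewrite /fsq exchange_big; apply: eq_bigr => i _; apply: eq_bigr => j _; by rewrite mxE. Qed.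

Lemma dotm_tr n (A B : 'M[R]_n) : dotm A B = \tr (A^T *m B).
Proof.
rewrite /dotm /mxtrace exchange_big; apply: eq_bigr => j _.
rewrite mxE; apply: eq_bigr => i _; by rewrite mxE.
Qed.

Lemma l1_Btmul n m (B : 'M[R]_n) (Z : 'M[R]_(n, m)) c :
  (forall k, \sum_i `|B k i| <= c) -> l1 (B^T *m Z) <= c * l1 Z.
Proof.
move=> Hc.
have H1 : l1 (B^T *m Z) <= \sum_i \sum_j \sum_k `|B k i| * `|Z k j|.
  apply: ler_sum => i _; apply: ler_sum => j _; rewrite mxE.
  apply: le_trans (ler_norm_sum _ _ _) _; apply: ler_sum => k _.
  by rewrite normrM mxE.
apply: le_trans H1 _.
rewrite exchange_big /=.
rewrite (eq_bigr (fun j => \sum_k \sum_i `|B k i| * `|Z k j|)); last first.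
  by move=> j _; rewrite exchange_big.
rewrite exchange_big /= /l1 mulr_sumr; apply: ler_sum => k _.
rewrite mulr_sumr; apply: ler_sum => j _.
rewrite -mulr_suml; apply: ler_wpM2r => //.
Qed.

Lemma sq_le (x y : R) : `|x| <= y -> x ^+ 2 <= y ^+ 2.
Proof.
move=> h; have y0 : 0 <= y by apply: le_trans h.
rewrite -(real_normK (num_real x)).
have := normr_ge0 x; nra.
Qed.

Lemma fsq_Btmul n m (B : 'M[R]_n) (Z : 'M[R]_(n, m)) c : 0 <= c ->
  (forall k, \sum_i `|B k i| <= c) -> (forall i, \sum_k `|B k i| <= c) ->
  fsq (B^T *m Z) <= c ^+ 2 * fsq Z.
Proof.
move=> c0 Hr Hcl.
have H1 : fsq (B^T *m Z) <= \sum_i \sum_j c * \sum_k `|B k i| * Z k j ^+ 2.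
  apply: ler_sum => i _; apply: ler_sum => j _; rewrite mxE.
  have e : \sum_k B^T i k * Z k j = \sum_k B k i * Z k j.
    by apply: eq_bigr => k _; rewrite mxE.
  rewrite e.
  apply: le_trans (_ : (\sum_k `|B k i| * `|Z k j|) ^+ 2 <= _).
    apply: sq_le; apply: le_trans (ler_norm_sum _ _ _) _.
    by apply: ler_sum => k _; rewrite normrM.
  apply: le_trans (cs_w (fun k => `|Z k j|) (fun k => normr_ge0 (B k i))) _.
  have e2 : \sum_k `|B k i| * `|Z k j| ^+ 2 = \sum_k `|B k i| * Z k j ^+ 2.
    by apply: eq_bigr => k _; rewrite real_normK // num_real.
  rewrite e2; apply: ler_wpM2r => //.
  by apply: sumr_ge0 => k _; rewrite mulr_ge0 ?sqr_ge0.
apply: le_trans H1 _.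
rewrite exchange_big /=.
rewrite (eq_bigr (fun j => c * \sum_k \sum_i `|B k i| * Z k j ^+ 2)); last first.
  by move=> j _; rewrite -mulr_sumr exchange_big.
rewrite -mulr_sumr exchange_big /= /fsq expr2 -mulrA; apply: ler_wpM2l => //.
rewrite mulr_sumr; apply: ler_sum => k _.
rewrite mulr_sumr; apply: ler_sum => j _.
rewrite -mulr_suml; apply: ler_wpM2r => //; exact: sqr_ge0.
Qed.

Lemma l1_split m n (Z : 'M[R]_(m, n)) (S : {set 'I_m * 'I_n}) :
  l1 Z = \sum_(k in S) `|Z k.1 k.2| + \sum_(k in ~: S) `|Z k.1 k.2|.
Proof.
rewrite /l1 pair_bigA (bigID (fun k => k \in S)) /=; congr (_ + _).
by apply: eq_bigl => k; rewrite in_setC.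
Qed.

Lemma cone m n (V H : 'M[R]_(m, n)) (S : {set 'I_m * 'I_n}) :
  l1 H <= l1 (V + H) - l1 V + 2%:R * \sum_(k in S) `|H k.1 k.2|
          + 2%:R * \sum_(k in ~: S) `|V k.1 k.2|.
Proof.
rewrite (l1_split H S) (l1_split (V + H) S) (l1_split V S).
have A1 : \sum_(k in S) `|V k.1 k.2| <=
   \sum_(k in S) `|(V + H) k.1 k.2| + \sum_(k in S) `|H k.1 k.2|.
  rewrite -big_split /=; apply: ler_sum => k _; rewrite mxE.
  have := ler_normD (V k.1 k.2 + H k.1 k.2) (- H k.1 k.2).
  by rewrite addrK normrN.
have A2 : \sum_(k in ~: S) `|H k.1 k.2| <=
   \sum_(k in ~: S) `|(V + H) k.1 k.2| + \sum_(k in ~: S) `|V k.1 k.2|.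
  rewrite -big_split /=; apply: ler_sum => k _; rewrite mxE.
  have e : V k.1 k.2 + H k.1 k.2 - V k.1 k.2 = H k.1 k.2 by ring.
  have := ler_normD (V k.1 k.2 + H k.1 k.2) (- V k.1 k.2).
  by rewrite e normrN.
lra.
Qed.

Lemma pS_bound m n (H : 'M[R]_(m, n)) (S : {set 'I_m * 'I_n}) s :
  (#|S| <= s)%N -> (\sum_(k in S) `|H k.1 k.2|) ^+ 2 <= s%:R * fsq H.
Proof.
move=> hS.
have e1 : \sum_(k in S) `|H k.1 k.2| = \sum_k (k \in S)%:R * `|H k.1 k.2|.
  rewrite big_mkcond /=; apply: eq_bigr => k _; case: (k \in S) => /=; ring.
have e2 : \sum_k (k \in S)%:R = #|S|%:R :> R.
  rewrite -sum1_card natr_sum [RHS]big_mkcond /=; apply: eq_bigr => k _.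
  by case: (k \in S).
rewrite e1; apply: le_trans (cs_w _ (fun k => ler0n _ (k \in S))) _.
rewrite e2; apply: ler_pM.
- exact: ler0n.
- by apply: sumr_ge0 => k _; rewrite mulr_ge0 ?sqr_ge0.
- by rewrite ler_nat.
rewrite /fsq pair_bigA; apply: ler_sum => k _.
case: (k \in S) => /=; rewrite ?mul1r ?mul0r ?sqr_ge0 //.
by rewrite real_normK // num_real.
Qed.

Lemma Dtmul_l1 N (Z : 'M[R]_N) : l1 ((Dmx R N)^T *m Z) <= 2%:R * l1 Z.
Proof. by apply: l1_Btmul => k; apply: Drow. Qed.

Lemma mulD_l1 N (Z : 'M[R]_N) : l1 (Z *m Dmx R N) <= 2%:R * l1 Z.
Proof.
by rewrite -l1_tr trmx_mul -(l1_tr Z); apply: l1_Btmul => k; apply: Drow.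
Qed.

Lemma Dtmul_fsq N (Z : 'M[R]_N) : fsq ((Dmx R N)^T *m Z) <= 4%:R * fsq Z.
Proof.
have -> : 4%:R = (2%:R) ^+ 2 :> R by rewrite expr2 -natrM.
by apply: fsq_Btmul => // k; [apply: Drow | apply: Dcol].
Qed.

Lemma mulD_fsq N (Z : 'M[R]_N) : fsq (Z *m Dmx R N) <= 4%:R * fsq Z.
Proof. by rewrite -fsq_tr trmx_mul -(fsq_tr Z); apply: Dtmul_fsq. Qed.

Lemma dot_id N (E W : 'M[R]_N) :
  dotm E (Dmx R N *m W *m (Dmx R N)^T) = dotm ((Dmx R N)^T *m E *m Dmx R N) W.
Proof.
rewrite !dotm_tr !mulmxA mxtrace_mulC !mulmxA.
by rewrite !trmx_mul trmxK mulmxA.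
Qed.

Lemma dot_le N (M W : 'M[R]_N) d : (forall i j, `|W i j| <= d) ->
  `|dotm M W| <= d * l1 M.
Proof.
move=> hW; rewrite /dotm /l1; apply: le_trans (ler_norm_sum _ _ _) _.
rewrite mulr_sumr; apply: ler_sum => i _.
apply: le_trans (ler_norm_sum _ _ _) _.
rewrite mulr_sumr; apply: ler_sum => j _.
by rewrite normrM mulrC ler_wpM2r.
Qed.

Lemma final_ineq (a r d p p' : R) : 0 <= a -> 0 <= r -> 0 <= d -> 0 <= p -> 0 <= p' ->
  a ^+ 2 <= d ^+ 2 * (8%:R * r * a + 2%:R * (p ^+ 2 + p' ^+ 2)) ->
  a <= 8%:R * (r * d + p + p') * d.
Proof.
move=> a0 r0 d0 p0 p0' h.
rewrite leNgt; apply/negP => hlt.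
set K := 8%:R * (r * d + p + p') * d in hlt.
have K0 : 0 <= K by rewrite /K; nra.
have h1 : a * K < a ^+ 2 by rewrite expr2; nra.
have e2 : a * K = d ^+ 2 * (8%:R * r * a) + 8%:R * (p + p') * d * a.
  rewrite /K; ring.
have c0 : 0 <= 8%:R * (p + p') * d by apply: mulr_ge0 => //; apply: mulr_ge0 => //; lra.
have h2 : 8%:R * (p + p') * d * K <= 8%:R * (p + p') * d * a.
  by apply: ler_wpM2l => //; apply: ltW.
have e3 : 8%:R * (p + p') * d * K = 64%:R * d ^+ 2 * ((p + p') * r * d + (p + p') ^+ 2).
  rewrite /K; ring.
have h3 : d ^+ 2 * (2%:R * (p ^+ 2 + p' ^+ 2)) <= 8%:R * (p + p') * d * K.
  rewrite e3.
  have q0 : 0 <= (p + p') * r * d by apply: mulr_ge0 => //; apply: mulr_ge0 => //; lra.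
  have q1 : 2%:R * (p ^+ 2 + p' ^+ 2) <= 64%:R * ((p + p') * r * d + (p + p') ^+ 2).
    have := mulr_ge0 p0 p0'; rewrite !expr2; nra.
  rewrite (_ : 64%:R * d ^+ 2 * _ = d ^+ 2 * (64%:R * ((p + p') * r * d + (p + p') ^+ 2))); last by ring.
  by apply: ler_wpM2l => //; exact: sqr_ge0.
lra.
Qed.
End S.

Theorem theorem4 (R : realType) :
  exists C : R, forall (N : nat) (delta : R) (A : seq R)
    (X q u Xhat : 'M[R]_N),
    0 < delta ->
    alphabet_step A delta ->
    (forall i j, 0 <= X i j <= 1) ->
    sigma_delta_2D A X q u ->
    maxnorm u <= delta / 2 ->
    feasible delta q Xhat ->
    (forall Z, feasible delta q Z -> objective Xhat <= objective Z) ->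
    forall s : nat, (1 <= s <= N ^ 2)%N ->
      frob (Xhat - X) <=
        C * (Num.sqrt s%:R * Num.sqrt delta
             + Num.sqrt (sigma_s s ((Dmx R N)^T *m X))
             + Num.sqrt (sigma_s s (X *m Dmx R N))) * Num.sqrt delta.
Proof.
exists 8%:R => N delta A X q u Xhat d0 _ _ hsd hu hfe hopt s _.
set D := Dmx R N.
have DU : D \in unitmx by apply: Dunit.
have XqE : X - q = D *m u *m D^T.
  apply/matrixP => i j; rewrite DuDt !mxE.
  have [_ e] := hsd i j; rewrite -(uget_S u i j) in e.
  move: e; rewrite /=; lra.
have inv_u : invmx D *m (X - q) *m (invmx D)^T = u.
  by rewrite XqE -!mulmxA mulKmx // -trmx_mul mulVmx // trmx1 mulmx1.
have hfX : feasible delta q X by rewrite /feasible inv_u.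
have hobj := hopt X hfX.
set E := Xhat - X.
set W := invmx D *m E *m (invmx D)^T.
have EW : E = D *m W *m D^T.
  by rewrite /W -!mulmxA mulKVmx // -trmx_mul mulmxV // trmx1 mulmx1.
have Wb : forall i j, `|W i j| <= delta.
  move=> i j.
  have e : W = invmx D *m (Xhat - q) *m (invmx D)^T - u.
    by rewrite -inv_u /W -mulmxBl -mulmxBr /E; congr (_ *m _ *m _); rewrite opprB addrA subrK.
  rewrite e.
  set M := invmx D *m (Xhat - q) *m (invmx D)^T.
  have -> : (M - u) i j = M i j - u i j by rewrite !mxE.
  apply: le_trans (ler_normB _ _) _.
  have := maxnorm_ge M i j.
  have := maxnorm_ge u i j.
  move: hfe; rewrite /feasible => hfe; lra.
set H := D^T *m E.
set G := E *m D.
have MH : D^T *m E *m D = H *m D by [].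
have MG : D^T *m E *m D = D^T *m G by rewrite /G mulmxA.
set a := frob E.
have fE0 : 0 <= fsq E by apply: sumr_ge0 => i _; apply: sumr_ge0 => j _; exact: sqr_ge0.
have a2 : a ^+ 2 = fsq E by rewrite /a /frob sqr_sqrtr.
have a0 : 0 <= a by apply: sqrtr_ge0.
have key : a ^+ 2 <= delta * (l1 H + l1 G).
  have e1 : a ^+ 2 = dotm (D^T *m E *m D) W.
    by rewrite a2 -dot_id -EW /fsq /dotm; apply: eq_bigr => i _; apply: eq_bigr => j _; rewrite expr2.
  rewrite e1; apply: le_trans (ler_norm _) _; apply: le_trans (dot_le _ Wb) _.
  apply: ler_wpM2l; first exact: ltW.
  have := mulD_l1 H; have := Dtmul_l1 G; rewrite -MH -MG; lra.
have [S [hS eS]] := sigma_arg s (D^T *m X).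
have [S' [hS' eS']] := sigma_arg s (X *m D).
have coneH := cone (D^T *m X) H S.
have coneG := cone (X *m D) G S'.
have eV : D^T *m X + H = D^T *m Xhat by rewrite /H /E mulmxBr addrC subrK.
have eV' : X *m D + G = Xhat *m D by rewrite /G /E mulmxBl addrC subrK.
rewrite eV in coneH; rewrite eV' in coneG.
move: hobj; rewrite /objective => hobj.
have r0 : 0 <= Num.sqrt (s%:R : R) by apply: sqrtr_ge0.
have tb : forall (Z : 'M[R]_N) (T : {set 'I_N * 'I_N}), (#|T| <= s)%N ->
    fsq Z <= 4%:R * fsq E ->
    \sum_(k in T) `|Z k.1 k.2| <= 2%:R * Num.sqrt s%:R * a.
  move=> Z T hT hZ.
  have := pS_bound Z hT => hb.
  have s0 : (0 : R) <= s%:R by apply: ler0n.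
  have hsq : (Num.sqrt (s%:R : R)) ^+ 2 = s%:R by rewrite sqr_sqrtr.
  have t0 : 0 <= \sum_(k in T) `|Z k.1 k.2| by apply: sumr_ge0 => k _.
  rewrite -(ler_pXn2r (n := 2)) // ?nnegrE //; last first.
    by rewrite mulr_ge0 // mulr_ge0.
  rewrite exprMn exprMn hsq a2; apply: le_trans hb _.
  rewrite (_ : 2%:R ^+ 2 = 4%:R :> R); last by rewrite expr2 -natrM.
  have := ler_wpM2l s0 hZ; nra.
have tH := tb H S hS (Dtmul_fsq E).
have tG := tb G S' hS' (mulD_fsq E).
set sg := sigma_s s (D^T *m X) in eS *.
set sg' := sigma_s s (X *m D) in eS' *.
have sg0 : 0 <= sg by rewrite eS; apply: sumr_ge0 => k _.
have sg0' : 0 <= sg' by rewrite eS'; apply: sumr_ge0 => k _.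
rewrite -eS in coneH; rewrite -eS' in coneG.
have L : l1 H + l1 G <= 8%:R * Num.sqrt s%:R * a + 2%:R * (sg + sg') by lra.
have key2 : a ^+ 2 <= delta * (8%:R * Num.sqrt s%:R * a + 2%:R * (sg + sg')).
  apply: le_trans key _; apply: ler_wpM2l => //; exact: ltW.
apply: final_ineq => //; try exact: sqrtr_ge0.
have d0' := ltW d0; rewrite !sqr_sqrtr //; by move: key2; rewrite a2.
Qed.
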